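(* Let $\mathfrak{g}_1,\mathfrak{g}_2$ be real solvable Lie algebras with $m_i=b_1(\mathfrak{g}_i)$. If $\mathcal{N}(\mathfrak{g}_1)=\mathcal{N}(\mathfrak{g}_2)=0$, then $\mathcal{N}(\mathfrak{g}_1\underline{\times}\mathfrak{g}_2)=m_1m_2$.
   Context: All Lie algebras are finite-dimensional over $\mathbb{R}$; $b_1(\mathfrak{g})=\dim\mathfrak{g}/[\mathfrak{g},\mathfrak{g}]$. $\mathcal{N}(\mathfrak{g})$ denotes the number of functionally independent invariants of the coadjoint representation: $\mathcal{N}(\mathfrak{g})=\dim\mathfrak{g}-\max_x\operatorname{rank}\big(\sum_k C_{ij}^kx_k\big)_{i,j}$, where $C_{ij}^k$ are the structure constants in a basis. Product by generators: choose linear forms $\omega_1,\dots,\omega_{m_1}$ on $\mathfrak{g}_1$ vanishing on $[\mathfrak{g}_1,\mathfrak{g}_1]$ and inducing a basis of $(\mathfrak{g}_1/[\mathfrak{g}_1,\mathfrak{g}_1])^*$, similarly $\omega'_1,\dots,\omega'_{m_2}$ for $\mathfrak{g}_2$; $\mathfrak{g}_1\underline{\times}\mathfrak{g}_2$ is the Lie algebra on $\mathfrak{g}_1\oplus\mathfrak{g}_2\oplus\mathbb{R}^{m_1m_2}$ (basis $Z_{ij}$ of the last summand) whose bracket restricts to the given brackets on $\mathfrak{g}_1$ and $\mathfrak{g}_2$, with $Z_{ij}$ central and $[x,y]=\sum_{i,j}\omega_i(x)\omega'_j(y)Z_{ij}$ for $x\in\mathfrak{g}_1$, $y\in\mathfrak{g}_2$.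 *)

(* Defs.v *)
From HB Require Import structures.
From mathcomp Require Import all_boot all_order all_algebra.
From mathcomp Require Import boolp reals.
Set Implicit Arguments. Unset Strict Implicit. Unset Printing Implicit Defensive.
Import Order.TTheory GRing.Theory Num.Theory.
Local Open Scope ring_scope.

(* A real Lie algebra of dimension n is given, in the basis e_0..e_(n-1),
   by its structure constants c i j k = C_{ij}^k, i.e. [e_i,e_j] = sum_k c i j k e_k.
   Elements are row vectors 'rV[R]_n. *)
Section Lie.
Variable R : realType.
Variable n : nat.
Variable c : 'I_n -> 'I_n -> 'I_n -> R.

Definition lie_br (x y : 'rV[R]_n) : 'rV[R]_n :=
  \row_k \sum_(i < n) \sum_(j < n) x 0 i * y 0 j * c i j k.

Definition is_lie : Prop :=
  (forall i j k, c i j k = - c j i k) /\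
  (forall x y z : 'rV[R]_n,
     lie_br x (lie_br y z) + lie_br y (lie_br z x) + lie_br z (lie_br x y) = 0).

(* [U,V] for subspaces U,V (represented by matrices whose rows span them). *)
Definition br_space (U V : 'M[R]_n) : 'M[R]_n :=
  (\sum_(i < n) \sum_(j < n) <<lie_br (row i U) (row j V)>>)%MS.

Definition derived_alg : 'M[R]_n := br_space 1%:M 1%:M.

Definition derived_series (k : nat) : 'M[R]_n :=
  iter k (fun U => br_space U U) 1%:M.

Definition lie_solvable : Prop := exists k, derived_series k = 0.

Definition b1 : nat := (n - \rank derived_alg)%N.

Definition coadj_mx (x : 'rV[R]_n) : 'M[R]_n :=
  \matrix_(i, j) \sum_(k < n) c i j k * x 0 k.

Definition max_coadj_rank : nat :=
  \max_(r < n.+1 | `[< exists x : 'rV[R]_n, \rank (coadj_mx x) = r >]) r.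

Definition N_inv : nat := (n - max_coadj_rank)%N.

(* W : 'M_(n,m), whose j-th column is the linear form omega_j (omega_j(x) = (x *m W) 0 j),
   is an admissible choice of forms: they vanish on [g,g] and induce a basis of
   (g/[g,g])^* (i.e. they are linearly independent, m = b1 being given separately). *)
Definition gen_forms (m : nat) (W : 'M[R]_(n, m)) : Prop :=
  (derived_alg *m W = 0) /\ \rank W = m.
End Lie.

(* Product by generators g1 x_ g2 on R^(n1) + R^(n2) + R^(m1*m2);
   the basis vector Z_ij of the last summand is delta at mxvec_index i j. *)
Section GProd.
Variable R : realType.
Variables n1 n2 m1 m2 : nat.
Variable c1 : 'I_n1 -> 'I_n1 -> 'I_n1 -> R.
Variable c2 : 'I_n2 -> 'I_n2 -> 'I_n2 -> R.
Variable W1 : 'M[R]_(n1, m1).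
Variable W2 : 'M[R]_(n2, m2).

Definition gprod_br (x y : 'rV[R]_(n1 + n2 + m1 * m2)) : 'rV[R]_(n1 + n2 + m1 * m2) :=
  let x1 := lsubmx (lsubmx x) in let x2 := rsubmx (lsubmx x) in
  let y1 := lsubmx (lsubmx y) in let y2 := rsubmx (lsubmx y) in
  row_mx (row_mx (lie_br c1 x1 y1) (lie_br c2 x2 y2))
         (mxvec (((x1 *m W1)^T *m (y2 *m W2)) - ((y1 *m W1)^T *m (x2 *m W2)))).

Definition gprod_const (i j k : 'I_(n1 + n2 + m1 * m2)) : R :=
  gprod_br (delta_mx 0 i) (delta_mx 0 j) 0 k.
End GProd.

(* Main.v *)
Require Import Defs.
From HB Require Import structures.
From mathcomp Require Import all_boot all_order all_algebra.
From mathcomp Require Import boolp reals.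
Set Implicit Arguments. Unset Strict Implicit. Unset Printing Implicit Defensive.
Import Order.TTheory GRing.Theory Num.Theory.
Local Open Scope ring_scope.

Section Aux.
Variable R : realType.

Lemma lie_br0l n (c : 'I_n -> 'I_n -> 'I_n -> R) y : lie_br c 0 y = 0.
Proof. apply/rowP => k; rewrite !mxE big1 // => i _; rewrite big1 // => j _; by rewrite mxE !mul0r. Qed.

Lemma lie_br0r n (c : 'I_n -> 'I_n -> 'I_n -> R) x : lie_br c x 0 = 0.
Proof. apply/rowP => k; rewrite !mxE big1 // => i _; rewrite big1 // => j _; by rewrite mxE mulr0 mul0r. Qed.

Lemma lie_br_delta n (c : 'I_n -> 'I_n -> 'I_n -> R) a b k :
  lie_br c (delta_mx 0 a) (delta_mx 0 b) 0 k = c a b k.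
Proof.
rewrite !mxE (bigD1 a) //= [X in _ + X]big1 ?addr0 => [|i ia]; last first.
  by apply: big1 => j _; rewrite mxE (negbTE ia) andbF !mul0r.
rewrite (bigD1 b) //= [X in _ + X]big1 ?addr0 => [|j jb]; last by rewrite !mxE (negbTE jb) andbF mulr0 mul0r.
by rewrite !mxE !eqxx /= !mul1r.
Qed.

Lemma lsub0 m p q : lsubmx (0 : 'M[R]_(m, p + q)) = 0.
Proof. by apply/matrixP => i j; rewrite !mxE. Qed.
Lemma rsub0 m p q : rsubmx (0 : 'M[R]_(m, p + q)) = 0.
Proof. by apply/matrixP => i j; rewrite !mxE. Qed.
Lemma mxvec0 m p : mxvec (0 : 'M[R]_(m, p)) = 0.
Proof. by apply/eqP; rewrite mxvec_eq0. Qed.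

Variables n1 n2 m1 m2 : nat.
Variable c1 : 'I_n1 -> 'I_n1 -> 'I_n1 -> R.
Variable c2 : 'I_n2 -> 'I_n2 -> 'I_n2 -> R.
Variable W1 : 'M[R]_(n1, m1).
Variable W2 : 'M[R]_(n2, m2).
Local Notation N := (n1 + n2 + m1 * m2)%N.
Local Notation c := (gprod_const c1 c2 W1 W2).

Definition i1 (a : 'I_n1) : 'I_N := lshift _ (lshift n2 a).
Definition i2 (b : 'I_n2) : 'I_N := lshift _ (rshift n1 b).
Definition iz (z : 'I_(m1 * m2)) : 'I_N := rshift _ z.

Lemma d1 a : delta_mx (0 : 'I_1) (i1 a) = row_mx (row_mx (delta_mx 0 a) 0) 0 :> 'rV[R]_N.
Proof. by rewrite /i1 !delta_mx_lshift. Qed.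
Lemma d2 b : delta_mx (0 : 'I_1) (i2 b) = row_mx (row_mx 0 (delta_mx 0 b)) 0 :> 'rV[R]_N.
Proof. by rewrite /i2 delta_mx_lshift delta_mx_rshift. Qed.
Lemma dz z : delta_mx (0 : 'I_1) (iz z) = row_mx 0 (delta_mx 0 z) :> 'rV[R]_N.
Proof. by rewrite /iz delta_mx_rshift. Qed.

Lemma gz z j k : c (iz z) j k = 0.
Proof.
rewrite /gprod_const /gprod_br dz row_mxKl lsub0 rsub0 lie_br0l lie_br0l !mul0mx.
by rewrite trmx0 mul0mx mulmx0 subrr mxvec0 !row_mx0 mxE.
Qed.

Lemma gz' i z k : c i (iz z) k = 0.
Proof.
rewrite /gprod_const /gprod_br dz row_mxKl lsub0 rsub0 lie_br0r lie_br0r !mul0mx.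
by rewrite trmx0 mul0mx mulmx0 subrr mxvec0 !row_mx0 mxE.
Qed.

Lemma c11 a b k : c (i1 a) (i1 b) (i1 k) = c1 a b k.
Proof. rewrite /gprod_const /gprod_br /i1 !row_mxEl !d1 !row_mxKl; exact: lie_br_delta. Qed.
Lemma c22 a b k : c (i2 a) (i2 b) (i2 k) = c2 a b k.
Proof. rewrite /gprod_const /gprod_br /i2 row_mxEl row_mxEr !d2 !row_mxKl !row_mxKr; exact: lie_br_delta. Qed.
Lemma c12 a b k : c (i1 a) (i1 b) (i2 k) = 0.
Proof. by rewrite /gprod_const /gprod_br /i2 row_mxEl row_mxEr !d1 row_mxKl row_mxKr lie_br0l mxE. Qed.
Lemma c21 a b k : c (i2 a) (i2 b) (i1 k) = 0.
Proof. by rewrite /gprod_const /gprod_br /i1 !row_mxEl !d2 !row_mxKl lie_br0l mxE. Qed.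
Ltac cx := rewrite /gprod_const /gprod_br /i1 /i2 ?row_mxEl ?row_mxEr ?d1 ?d2 !row_mxKl ?row_mxKr ?lie_br0l ?lie_br0r mxE.
Lemma x121 a b k : c (i1 a) (i2 b) (i1 k) = 0. Proof. by cx. Qed.
Lemma x122 a b k : c (i1 a) (i2 b) (i2 k) = 0. Proof. by cx. Qed.
Lemma x211 a b k : c (i2 a) (i1 b) (i1 k) = 0. Proof. by cx. Qed.
Lemma x212 a b k : c (i2 a) (i1 b) (i2 k) = 0. Proof. by cx. Qed.

Lemma ub x : (\rank (coadj_mx c x) <= n1 + n2)%N.
Proof.
set M := coadj_mx c x.
have hd : dsubmx M = 0.
  apply/matrixP => i j; rewrite !mxE; apply: big1 => k _.
  by rewrite (gz i j k) mul0r.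
rewrite -(vsubmxK M) hd rank_col_mx0; exact: rank_leq_row.
Qed.

Lemma sum_split (x1 : 'rV[R]_n1) (x2 : 'rV[R]_n2) i j :
  coadj_mx c (row_mx (row_mx x1 x2) 0) i j =
  \sum_k c i j (i1 k) * x1 0 k + \sum_k c i j (i2 k) * x2 0 k.
Proof.
rewrite mxE !big_split_ord /= [X in _ + X]big1 ?addr0 => [|k _]; last by rewrite row_mxEr mxE mulr0.
by congr (_ + _); apply: eq_bigr => k _; rewrite /i1 /i2 !row_mxEl ?row_mxEr.
Qed.

Lemma lb (x1 : 'rV[R]_n1) (x2 : 'rV[R]_n2) :
  coadj_mx c (row_mx (row_mx x1 x2) 0) =
  block_mx (block_mx (coadj_mx c1 x1) 0 0 (coadj_mx c2 x2)) 0 0 0.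
Proof.
apply/matrixP => i j; rewrite sum_split.
rewrite -[i]splitK -[j]splitK; case: (split i) => [i'|z]; case: (split j) => [j'|z'] /=;
  rewrite ?block_mxEul ?block_mxEur ?block_mxEdl ?block_mxEdr.
- rewrite -[i']splitK -[j']splitK; case: (split i') => [a|a]; case: (split j') => [b|b] /=;
  rewrite ?block_mxEul ?block_mxEur ?block_mxEdl ?block_mxEdr ?mxE.
  + under eq_bigr => k _ do rewrite c11.
    by rewrite [X in _ + X]big1 ?addr0 // => k _; rewrite c12 mul0r.
  + by rewrite !big1 ?addr0 // => k _; rewrite ?x121 ?x122 mul0r.
  + by rewrite !big1 ?addr0 // => k _; rewrite ?x211 ?x212 mul0r.
  + under [X in _ + X]eq_bigr => k _ do rewrite c22.
    by rewrite [X in X + _]big1 ?add0r // => k _; rewrite c21 mul0r.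
- by rewrite mxE !big1 ?addr0 // => k _; rewrite gz' mul0r.
- by rewrite mxE !big1 ?addr0 // => k _; rewrite gz mul0r.
- by rewrite mxE !big1 ?addr0 // => k _; rewrite gz mul0r.
Qed.
End Aux.

Section Max.
Variable R : realType.
Variable n : nat.
Variable c : 'I_n -> 'I_n -> 'I_n -> R.

Lemma max_coadj_eq r : (r <= n)%N -> (forall x, \rank (coadj_mx c x) <= r)%N ->
  (exists x, \rank (coadj_mx c x) = r) -> max_coadj_rank c = r.
Proof.
move=> rn ub [x0 hx0]; apply/eqP; rewrite eqn_leq; apply/andP; split.
  apply/bigmax_leqP => i /asboolP [x <-]; exact: ub.
have rlt : (r < n.+1)%N by [].
have -> : r = nat_of_ord (Ordinal rlt) by [].
apply: (@leq_bigmax_cond _ _ (fun i : 'I_n.+1 => nat_of_ord i)).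
by apply/asboolP; exists x0.
Qed.

Lemma N0_wit : N_inv c = 0%N -> exists x, \rank (coadj_mx c x) = n.
Proof.
case: (pselect (exists x, \rank (coadj_mx c x) = n)) => // hn.
rewrite /N_inv /max_coadj_rank => /eqP; rewrite subn_eq0 => h.
have : (\max_(r < n.+1 | `[< exists x : 'rV[R]_n, \rank (coadj_mx c x) = r >]) r <= n.-1)%N.
  apply/bigmax_leqP => i /asboolP [x hx].
  have : (\rank (coadj_mx c x) <= n)%N by exact: rank_leq_row.
  rewrite leq_eqVlt hx => /orP [/eqP e|]; last by move=> lt; rewrite -ltnS prednK // (leq_ltn_trans _ lt).
  by exfalso; apply: hn; exists x; rewrite hx.
move=> /(leq_trans h) h2.
have [n0|npos] := posnP n.
  exfalso; apply: hn; exists 0; apply/eqP; rewrite eqn_leq rank_leq_row /=.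
  by apply: (@leq_trans 0); [rewrite n0|].
by move: h2; rewrite leqNgt prednK ?leqnn.
Qed.
End Max.


Theorem corollary1 (R : realType) (n1 n2 m1 m2 : nat)
  (c1 : 'I_n1 -> 'I_n1 -> 'I_n1 -> R) (c2 : 'I_n2 -> 'I_n2 -> 'I_n2 -> R)
  (W1 : 'M[R]_(n1, m1)) (W2 : 'M[R]_(n2, m2)) :
  is_lie c1 -> is_lie c2 -> lie_solvable c1 -> lie_solvable c2 ->
  m1 = b1 c1 -> m2 = b1 c2 -> gen_forms c1 W1 -> gen_forms c2 W2 ->
  N_inv c1 = 0%N -> N_inv c2 = 0%N ->
  N_inv (gprod_const c1 c2 W1 W2) = (m1 * m2)%N.
Proof.
move=> _ _ _ _ _ _ _ _ h1 h2.
have [x1 hx1] := N0_wit h1; have [x2 hx2] := N0_wit h2.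
rewrite /N_inv (@max_coadj_eq _ _ _ (n1 + n2)).
- by rewrite addKn.
- exact: leq_addr.
- exact: ub.
- exists (row_mx (row_mx x1 x2) 0).
  by rewrite lb !rank_diag_block_mx mxrank0 hx1 hx2 addn0.
Qed.
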